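(* Let $n\ge 4$ and let $Q_F(n)$ be the reduced quiver of the GL$_2$-dimer of the fan triangulation of the $n$-gon whose diagonals are $v_1v_{k+2}$, $k=1,\dots,n-3$. Then $Q_F(n)$ has exactly $2n$ boundary vertices $1,\dots,2n$ and $n-3$ internal vertices $i_1,\dots,i_{n-3}$, and its arrows are exactly: the $2n+2$ arrows between boundary vertices $$x_k:k-1\to k\ (k\in[1,2n],\ \text{indices mod }2n),\qquad y_4:4\to 2,\qquad y_{2n}:2n\to 2n-2,$$ and the arrows $$\alpha_0:2\to i_1,\quad \alpha_k:i_k\to i_{k+1}\ (1\le k<n-3),\quad \alpha_{n-3}:i_{n-3}\to 2n,$$ $$\beta_{k-1}:i_k\to 2k+2\ (1\le k\le n-3),\qquad \gamma_k:2k+4\to i_k\ (1\le k\le n-3).$$ For $n=3$, $Q_F(3)$ has the six boundary vertices $1,\dots,6$, no internal vertices, and arrows $x_1,\dots,x_6$, $4\to2$, $2\to6$, $6\to4$.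
   Context: A triangulation of a convex polygon with vertices $v_1,\dots,v_n$ (anticlockwise) is a fan triangulation at $v_1$ if all its $n-3$ diagonals are incident with $v_1$. GL$_m$-dimer and its quiver: let $m\ge2$, $n\ge 3$, and let $T$ be a triangulation of a convex $n$-gon $P$ with vertices $v_1,\dots,v_n$ in anticlockwise order. Subdivide every triangle of $T$ by $m-1$ equidistant lines parallel to each of its sides into $m^2$ small triangles (upward ones, i.e. translates of the big triangle, and downward ones). Put a black node at the midpoint of each of the $m$ segments into which each side of each triangle (edge of $P$ or diagonal of $T$) is cut, a black node in every downward small triangle, and a white node in every upward small triangle. Join two nodes of different colour if they belong to the same small triangle or their small triangles share a side. This bipartite graph $G$ is the GL$_m$-dimer of $T$. Its quiver has one vertex for each connected component of $P\setminus G$ and, for each edge of $G$, one arrow between the two components it separates, oriented so that the white endpoint lies to its left; each white node gives an anticlockwise face and each black node of degree $\ge2$ a clockwise face; arrows in one face are boundary arrows, those in two faces internal arrows. Every 2-cycle of internal arrows is removed using the relations from the natural potential (on $G$: a bivalent black node is deleted and its two white neighbours are merged); the result is the reduced quiver. Vertices incident with boundary arrows are boundary vertices, the others internal. There are $mn$ boundary vertices, labelled $1,\dots,mn$ anticlockwise so that vertex $(j-1)m+1$ is the component at the corner $v_j$; the boundary arrows are $x_k:k-1\to k$. Here $m=2$. *)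

(* Defs.v *)
From Stdlib Require Import Arith Bool List Permutation Relations.
Import ListNotations.

(* Vertices v_1,...,v_n of the convex n-gon P (anticlockwise) are the  *)
(* numbers 1..n.  A triangulation is a list of triangles, each given   *)
(* by its three corners listed anticlockwise.                          *)

Definition succv (n a : nat) : nat := if a =? n then 1 else S a.
Definition predv (n a : nat) : nat := if a =? 1 then n else pred a.

Definition fan (n : nat) : list (nat * nat * nat) :=
  map (fun k => (1, k + 1, k + 2)) (seq 1 (n - 2)).

(* Nodes of the plane graph  G u dP  (G = GL_2-dimer, dP = boundary).  *)
(*   PV j    : the corner v_j of P (a vertex of dP only)               *)
(*   Wh i x  : white node in the upward small triangle at corner x of   *)
(*             the i-th triangle (0-based index in the list)           *)
(*   Ce i    : black node in the downward (central) small triangle of  *)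
(*             the i-th triangle                                       *)
(*   SB a b  : black node at the midpoint of the half of the side ab   *)
(*             that contains a (shared by both triangles if ab is a    *)
(*             diagonal)                                               *)
Inductive node : Type :=
| PV (j : nat)
| Wh (i x : nat)
| Ce (i : nat)
| SB (a b : nat).

Scheme Equality for node.

Definition node_eqb (u v : node) : bool :=
  if node_eq_dec u v then true else false.

Definition has_corner (t : nat * nat * nat) (x : nat) : bool :=
  let '(a, b, c) := t in (x =? a) || (x =? b) || (x =? c).

Definition next_prev (t : nat * nat * nat) (x : nat) : nat * nat :=
  let '(a, b, c) := t in
  if x =? a then (b, c) else if x =? b then (c, a) else (a, b).

Definition corners (t : nat * nat * nat) : list nat :=
  let '(a, b, c) := t in [a; b; c].

Definition tri (T : list (nat * nat * nat)) (i : nat) : nat * nat * nat :=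
  nth i T (0, 0, 0).

Definition side_whites (T : list (nat * nat * nat)) (a b : nat) : list node :=
  map (fun i => Wh i a)
      (filter (fun i => has_corner (tri T i) a && has_corner (tri T i) b
                        && negb (a =? b))
              (seq 0 (length T))).

(* Rotation system: neighbours of each node of G u dP, listed in       *)
(* anticlockwise order (read off from the geometric construction).     *)
Definition rot (n : nat) (T : list (nat * nat * nat)) (u : node) : list node :=
  match u with
  | PV j => [SB j (succv n j); SB j (predv n j)]
  | Wh i x => let '(y, z) := next_prev (tri T i) x in [SB x y; Ce i; SB x z]
  | Ce i => map (fun x => Wh i x) (corners (tri T i))
  | SB a b =>
      let ws := side_whites T a b in
      if b =? succv n a then [SB b a] ++ ws ++ [PV a]
      else if b =? predv n a then [PV a] ++ ws ++ [SB b a]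
      else ws
  end.

Definition nodes (n : nat) (T : list (nat * nat * nat)) : list node :=
  map PV (seq 1 n)
  ++ flat_map (fun i =>
       Ce i :: flat_map (fun x => let '(y, z) := next_prev (tri T i) x in
                                  [Wh i x; SB x y; SB x z])
                        (corners (tri T i)))
       (seq 0 (length T)).

Definition is_dart (n : nat) T (d : node * node) : Prop :=
  In (fst d) (nodes n T) /\ In (snd d) (rot n T (fst d)).

Fixpoint prev_aux (last : node) (l : list node) (v : node) : node :=
  match l with
  | [] => v
  | w :: l' => if node_eqb w v then last else prev_aux w l' v
  end.
Definition prevc (l : list node) (v : node) : node :=
  match l with
  | [] => v
  | w :: _ => if node_eqb w v then last l w else prev_aux w (tl l) v
  end.

(* face-tracing permutation: successor of a dart along the face lying
   to its LEFT (turn as far left as possible at the head) *)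
Definition phi n T (d : node * node) : node * node :=
  let '(u, v) := d in (v, prevc (rot n T v) u).

(* two darts have the same face on their left: faces of the plane map
   G u dP = connected components of P \ G (plus the outer face) *)
Definition same_face n T : relation (node * node) :=
  clos_refl_sym_trans _ (fun d e => is_dart n T d /\ e = phi n T d).

(* the outer face: on the left of the clockwise boundary dart v_2 -> v_1 *)
Definition outer_dart (n : nat) : node * node := (SB 1 2, PV 1).

(* a dart whose left face lies inside P, i.e. a quiver vertex *)
Definition inner_dart n T (d : node * node) : Prop :=
  is_dart n T d /\ ~ same_face n T d (outer_dart n).

(* the component of P \ G at the corner v_j, and the one at the
   midpoint of the polygon edge v_j v_{j+1} *)
Definition corner_dart n (j : nat) : node * node := (PV j, SB j (succv n j)).
Definition edge_dart n (j : nat) : node * node :=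
  (SB j (succv n j), SB (succv n j) j).

Definition dimer_edges (T : list (nat * nat * nat)) : list (node * node) :=
  flat_map (fun i =>
    flat_map (fun x => let '(y, z) := next_prev (tri T i) x in
                       [(Wh i x, SB x y); (Wh i x, SB x z); (Wh i x, Ce i)])
             (corners (tri T i)))
    (seq 0 (length T)).

Definition black_degree (T : list (nat * nat * nat)) (b : node) : nat :=
  length (filter (fun e => node_eqb (snd e) b) (dimer_edges T)).

(* The arrow of the quiver dual to the edge e = (w, b): it goes from the
   face on the left of the dart b -> w to the face on its right (= left
   face of w -> b), so that the white endpoint lies to its left.  A face
   is represented by any dart having it on its left. *)
Definition arrow_src (e : node * node) : node * node := (snd e, fst e).
Definition arrow_tgt (e : node * node) : node * node := (fst e, snd e).

(* Reduction: a bivalent black node is deleted (together with its two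
   edges, i.e. the two arrows of the corresponding 2-cycle) and its two
   white neighbours are merged; the faces are unchanged. *)
Definition reduced_edges (T : list (nat * nat * nat)) : list (node * node) :=
  filter (fun e => negb (black_degree T (snd e) =? 2)) (dimer_edges T).

(* boundary arrows: lying in exactly one face of the quiver, i.e. dual to
   an edge whose black endpoint has degree 1 *)
Definition boundary_edge T (e : node * node) : Prop :=
  In e (reduced_edges T) /\ black_degree T (snd e) = 1.

Inductive qlabel : Type :=
| Bd (k : nat)
| Int (k : nat).

Definition valid_label (n : nat) (l : qlabel) : Prop :=
  match l with
  | Bd k => 1 <= k <= 2 * n
  | Int k => 1 <= k <= n - 3
  end.

Definition x_arrows (n : nat) : list (qlabel * qlabel) :=
  map (fun k => (Bd (if k =? 1 then 2 * n else k - 1), Bd k)) (seq 1 (2 * n)).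

Definition QF_arrows (n : nat) : list (qlabel * qlabel) :=
  x_arrows n
  ++ [(Bd 4, Bd 2); (Bd (2 * n), Bd (2 * n - 2))]
  ++ [(Bd 2, Int 1)]
  ++ map (fun k => (Int k, Int (k + 1))) (seq 1 (n - 4))
  ++ [(Int (n - 3), Bd (2 * n))]
  ++ map (fun k => (Int k, Bd (2 * k + 2))) (seq 1 (n - 3))
  ++ map (fun k => (Bd (2 * k + 4), Int k)) (seq 1 (n - 3)).

Definition QF3_arrows : list (qlabel * qlabel) :=
  x_arrows 3 ++ [(Bd 4, Bd 2); (Bd 2, Bd 6); (Bd 6, Bd 4)].

Definition reduced_quiver_is (n : nat) (T : list (nat * nat * nat))
    (A : list (qlabel * qlabel)) : Prop :=
  exists f : node * node -> qlabel,
    (forall d e, inner_dart n T d -> inner_dart n T e ->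
                 (same_face n T d e <-> f d = f e))
    /\ (forall d, inner_dart n T d -> valid_label n (f d))
    /\ (forall l, valid_label n l -> exists d, inner_dart n T d /\ f d = l)
    /\ (forall j, 1 <= j <= n -> f (corner_dart n j) = Bd (2 * j - 1)
                                 /\ f (edge_dart n j) = Bd (2 * j))
    /\ (forall d, inner_dart n T d ->
          ((exists e, boundary_edge T e /\
               (same_face n T d (arrow_src e) \/ same_face n T d (arrow_tgt e)))
           <-> exists k, f d = Bd k))
    /\ Permutation (map (fun e => (f (arrow_src e), f (arrow_tgt e)))
                        (reduced_edges T)) A.

(* Main.v *)
Require Import Defs.
From Stdlib Require Import Arith List Permutation Relations Lia Sorting.Sorted.
Import ListNotations.


Definition nb (u v : node) : bool :=
  match u, v with
  | PV a, PV b => a =? b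
  | Wh i x, Wh j y => (i =? j) && (x =? y)
  | Ce i, Ce j => i =? j
  | SB a b, SB c d => (a =? c) && (b =? d)
  | _, _ => false
  end.

Lemma nb_spec u v : nb u v = true <-> u = v.
Proof.
  destruct u, v; simpl; split; intro H; try discriminate; try (inversion H; fail);
  repeat match goal with
  | H : (_ && _)%bool = true |- _ => apply andb_prop in H; destruct H
  | H : (_ =? _) = true |- _ => apply Nat.eqb_eq in H
  end; subst; auto;
  inversion H; subst; rewrite ?Nat.eqb_refl; auto.
Qed.

Lemma node_eqb_nb u v : node_eqb u v = nb u v.
Proof.
  unfold node_eqb. destruct (node_eq_dec u v) as [e|e].
  - subst. symmetry. apply nb_spec. auto.
  - symmetry. destruct (nb u v) eqn:E; auto. apply nb_spec in E. contradiction.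
Qed.

#[global] Arguments Nat.eqb : simpl never.
#[global] Arguments Nat.leb : simpl never.
#[global] Arguments Nat.ltb : simpl never.

Ltac subst_eq E :=
  match type of E with
  | ?a = ?b => first [is_var a; subst a | is_var b; subst b | idtac]
  end.

Ltac no_if t := match t with
  | context [if _ then _ else _] => fail 1
  | _ => idtac end.

Ltac destr_b :=
  match goal with
  | |- context [Nat.eqb ?a ?b] => no_if a; no_if b; let E := fresh "E" in
      destruct (Nat.eqb a b) eqn:E; [apply Nat.eqb_eq in E; try subst_eq E | apply Nat.eqb_neq in E]
  | |- context [Nat.leb ?a ?b] => no_if a; no_if b; let E := fresh "E" in
      destruct (Nat.leb a b) eqn:E; [apply Nat.leb_le in E | apply Nat.leb_gt in E]
  | |- context [Nat.ltb ?a ?b] => no_if a; no_if b; let E := fresh "E" in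
      destruct (Nat.ltb a b) eqn:E; [apply Nat.ltb_lt in E | apply Nat.ltb_ge in E]
  end; cbv beta iota delta [andb orb negb].

Ltac crush := repeat (try (exfalso; lia); destr_b); cbv beta iota delta [andb orb negb]; try (exfalso; lia).

Lemma fan_len n : length (fan n) = n - 2.
Proof. unfold fan. rewrite length_map, length_seq. auto. Qed.

Lemma tri_fan n i : i < n - 2 -> tri (fan n) i = (1, i + 2, i + 3).
Proof.
  intro H. unfold tri, fan.
  set (g := fun k : nat => (1, k + 1, k + 2)).
  assert (E : nth i (map g (seq 1 (n - 2))) (0,0,0) = g (nth i (seq 1 (n-2)) 0)).
  { rewrite (nth_indep _ (0,0,0) (g 0)) by (rewrite length_map, length_seq; lia).
    apply map_nth. }
  rewrite E, seq_nth by lia. unfold g. simpl. replace (S (i+1)) with (i+2) by lia. replace (S (i+2)) with (i+3) by lia. reflexivity.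
Qed.


Lemma ss_seq s m : StronglySorted lt (seq s m).
Proof.
  revert s; induction m; intro s; simpl; constructor; auto.
  apply Forall_forall. intros x Hx. apply in_seq in Hx. lia.
Qed.

Lemma ss_filter (p : nat -> bool) l : StronglySorted lt l -> StronglySorted lt (filter p l).
Proof.
  induction 1; simpl; [constructor|].
  destruct (p a); auto. constructor; auto.
  apply Forall_forall. intros x Hx. apply filter_In in Hx. destruct Hx.
  rewrite Forall_forall in H0. auto.
Qed.

Lemma ss_eq : forall l1 l2 : list nat, StronglySorted lt l1 -> StronglySorted lt l2 ->
  (forall x, In x l1 <-> In x l2) -> l1 = l2.
Proof.
  induction l1 as [|a l1 IH]; intros l2 S1 S2 H.
  - destruct l2 as [|b l2]; auto. exfalso. apply (proj2 (H b)). left; auto.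
  - destruct l2 as [|b l2]. { exfalso. apply (proj1 (H a)). left; auto. }
    inversion S1 as [|? ? T1 F1]; subst. inversion S2 as [|? ? T2 F2]; subst.
    rewrite Forall_forall in F1, F2.
    assert (a = b).
    { destruct (proj1 (H a) (or_introl eq_refl)) as [E|E]; auto.
      destruct (proj2 (H b) (or_introl eq_refl)) as [E'|E']; auto.
      apply F2 in E. apply F1 in E'. lia. }
    subst. f_equal. apply IH; auto. intro x. split; intro Hx.
    + destruct (proj1 (H x) (or_intror Hx)); auto. subst. apply F1 in Hx. lia.
    + destruct (proj2 (H x) (or_intror Hx)); auto. subst. apply F2 in Hx. lia.
Qed.

Definition idx1 (n c : nat) : list nat :=
  (if 3 <=? c then [c - 3] else []) ++ (if c <? n then [c - 2] else []).

Definition swidx (n a b : nat) : list nat :=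
  if a =? 1 then idx1 n b else if b =? 1 then idx1 n a
  else if b =? a + 1 then [a - 2] else [b - 2].

Definition vnode (n : nat) (u : node) : Prop :=
  match u with
  | PV j => 1 <= j <= n
  | Ce i => i + 3 <= n
  | Wh i x => i + 3 <= n /\ (x = 1 \/ x = i + 2 \/ x = i + 3)
  | SB a b => (a = 1 /\ 2 <= b <= n) \/ (b = 1 /\ 2 <= a <= n)
              \/ (2 <= a /\ b = a + 1 /\ b <= n) \/ (2 <= b /\ a = b + 1 /\ a <= n)
  end.

Lemma side_whites_fan n a b : 3 <= n -> vnode n (SB a b) ->
  side_whites (fan n) a b = map (fun i => Wh i a) (swidx n a b).
Proof.
  intros Hn Hv. unfold side_whites. f_equal. rewrite fan_len.
  apply ss_eq.
  - apply ss_filter, ss_seq.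
  - unfold swidx, idx1. simpl in Hv. crush; simpl;
    repeat constructor; simpl; lia.
  - intro x. rewrite filter_In, in_seq.
    split.
    + intros [Hx Hp]. rewrite tri_fan in Hp by lia. simpl in Hp.
      unfold swidx, idx1. simpl in Hv. revert Hp. crush; simpl; intros; try lia;
      try discriminate; lia.
    + intro Hx. unfold swidx, idx1 in Hx. simpl in Hv.
      assert (x < n - 2) by (revert Hx; crush; simpl; intros; lia).
      split; [lia|]. rewrite tri_fan by lia. simpl. revert Hx. crush; simpl; intros; lia.
Qed.


Definition rot' (n : nat) (u : node) : list node :=
  match u with
  | PV j => [SB j (succv n j); SB j (predv n j)]
  | Wh i x => if x =? 1 then [SB 1 (i+2); Ce i; SB 1 (i+3)]
              else if x =? i+2 then [SB x (i+3); Ce i; SB x 1]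
              else [SB x 1; Ce i; SB x (i+2)]
  | Ce i => [Wh i 1; Wh i (i+2); Wh i (i+3)]
  | SB a b => let ws := map (fun i => Wh i a) (swidx n a b) in
              if b =? succv n a then [SB b a] ++ ws ++ [PV a]
              else if b =? predv n a then [PV a] ++ ws ++ [SB b a] else ws
  end.

Lemma rot_fan n u : 3 <= n -> vnode n u -> rot n (fan n) u = rot' n u.
Proof.
  intros Hn Hv. destruct u; simpl; auto.
  - simpl in Hv. rewrite tri_fan by lia. simpl.
    destruct Hv as [Hi Hx]. crush; reflexivity.
  - simpl in Hv. rewrite tri_fan by lia. reflexivity.
  - rewrite side_whites_fan by auto. reflexivity.
Qed.

Lemma nodes_fan n u : 3 <= n -> (In u (nodes n (fan n)) <-> vnode n u).
Proof.
  intro Hn. unfold nodes. rewrite in_app_iff, in_map_iff, in_flat_map, fan_len.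
  split.
  - intros [[j [E Hj]] | [i [Hi Hu]]].
    + subst. apply in_seq in Hj. simpl. lia.
    + apply in_seq in Hi. rewrite tri_fan in Hu by lia. simpl in Hu.
      revert Hu. crush; simpl; intros Hu;
      repeat (destruct Hu as [Hu|Hu]; [subst; simpl; lia|]); contradiction.
  - destruct u as [j|i x|i|a b]; simpl; intro Hv.
    + left. exists j. split; auto. apply in_seq. lia.
    + right. exists i. split; [apply in_seq; lia|]. rewrite tri_fan by lia. simpl.
      crush; destruct Hv as [_ [Hx|[Hx|Hx]]]; subst; simpl; auto 20; exfalso; lia.
    + right. exists i. split; [apply in_seq; lia|]. rewrite tri_fan by lia. simpl. auto.
    + right.
      destruct Hv as [[Ha Hb]|[[Hb Ha]|[[Ha [Hb Hb']]|[Hb [Ha Ha']]]]]; subst.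
      * destruct (Nat.eq_dec b n).
        -- exists (b - 3). split; [apply in_seq; lia|]. rewrite tri_fan by lia. simpl.
           replace (b - 3 + 3) with b by lia. auto 10.
        -- exists (b - 2). split; [apply in_seq; lia|]. rewrite tri_fan by lia. simpl.
           replace (b - 2 + 2) with b by lia. auto 10.
      * destruct (Nat.eq_dec a n).
        -- exists (a - 3). split; [apply in_seq; lia|]. rewrite tri_fan by lia. simpl.
           replace (a - 3 + 3) with a by lia. crush. simpl; auto 20.
        -- exists (a - 2). split; [apply in_seq; lia|]. rewrite tri_fan by lia. simpl.
           replace (a - 2 + 2) with a by lia. crush. simpl; auto 20.
      * exists (a - 2). split; [apply in_seq; lia|]. rewrite tri_fan by lia. simpl.
        replace (a - 2 + 2) with a by lia. replace (a - 2 + 3) with (a + 1) by lia. crush. simpl; auto 20.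
      * exists (b - 2). split; [apply in_seq; lia|]. rewrite tri_fan by lia. simpl.
        replace (b - 2 + 2) with b by lia. replace (b - 2 + 3) with (b + 1) by lia. crush. simpl; auto 20.
Qed.

Lemma dart_fan n u v : 3 <= n -> (is_dart n (fan n) (u, v) <-> vnode n u /\ In v (rot' n u)).
Proof.
  intro Hn. unfold is_dart. simpl. rewrite nodes_fan by auto.
  split; intros [H1 H2]; split; auto; rewrite rot_fan in * by auto; auto.
Qed.


Ltac neq := first [reflexivity | f_equal; lia | f_equal; [lia|lia] ].
Ltac in_tac := match goal with
  | |- _ = _ \/ _ => first [left; neq | right; in_tac]
  | |- _ = _ => neq
  end.

Ltac rot_cases H :=
  revert H; unfold rot', swidx, idx1, succv, predv; crush; simpl; intro H;
  repeat (destruct H as [H|H]; [subst|]); try contradiction.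

Lemma rot_sym n u v : 3 <= n -> vnode n u -> In v (rot' n u) -> vnode n v /\ In u (rot' n v).
Proof.
  intros Hn Hu Hv. destruct u as [j|i x|i|a b]; simpl in Hu.
  all: rot_cases Hv.
  all: simpl; unfold rot', swidx, idx1, succv, predv; crush; simpl.
  all: try (split; [lia| in_tac]).
Qed.


Inductive face := FOut | FC (j : nat) | FE (j : nat) | FI (k : nat).

Definition fc (n : nat) (d : node * node) : face :=
  match d with
  | (PV j, SB _ b) => if b =? succv n j then FC j else FOut
  | (SB a b, PV _) => if b =? succv n a then FOut else FC a
  | (SB a b, SB _ _) => if b =? succv n a then FE a else FOut
  | (Ce i, Wh _ x) => if x =? 1 then (if i =? 0 then FE 1 else FI i)
                      else if x =? i+2 then FE (i+2)
                      else if i =? n-3 then FE n else FI (i+1)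
  | (Wh i x, Ce _) => if x =? 1 then (if i =? n-3 then FE n else FI (i+1))
                      else if x =? i+2 then (if i =? 0 then FE 1 else FI i)
                      else FE (i+2)
  | (Wh i x, SB _ y) => if x =? 1 then (if y =? i+2 then (if i =? 0 then FE 1 else FI i) else FC 1)
                        else if x =? i+2 then (if y =? 1 then FC x else FE x)
                        else if y =? 1 then (if i =? n-3 then FE n else FI (i+1)) else FC x
  | (SB a b, Wh j _) => if a =? 1 then (if j+2 =? b then FC 1 else if b =? n then FE n else FI (b-2))
                        else if b =? 1 then (if j+2 =? a then (if a =? 2 then FE 1 else FI (a-2)) else FC a)
                        else if b =? a+1 then FC a else FE (a-1)
  | _ => FOut
  end.

Definition mu (n : nat) (d : node * node) : nat :=
  match d with
  | (PV j, SB _ b) => if b =? succv n j then 0 else if j =? 1 then 3*n-1 else 3*j-4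
  | (SB a b, PV _) => if b =? succv n a then 3*(a-1) else 1
  | (SB a b, SB _ _) => if b =? succv n a then 0 else if a =? 1 then 3*n-2 else 3*a-5
  | (Ce i, Wh _ x) => if x =? 1 then (if i =? 0 then 2 else 6) else 2
  | (Wh i x, Ce _) => if x =? 1 then 3 else if x =? i+2 then (if i =? 0 then 3 else 7) else 3
  | (Wh i x, SB _ y) => if x =? 1 then (if y =? i+2 then (if i =? 0 then 1 else 5) else 2*(n-3-i)+2)
                        else if x =? i+2 then (if y =? 1 then (if i =? 0 then 2 else 4) else 1)
                        else if y =? 1 then 1 else 2
  | (SB a b, Wh j _) => if a =? 1 then (if j+2 =? b then 2*(n-b)+1 else 4)
                        else if b =? 1 then (if j+2 =? a then (if a =? 2 then 4 else 0) else 3)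
                        else if b =? a+1 then (if a =? 2 then 3 else 5) else 4
  | _ => 0
  end.

Definition canon (n : nat) (f : face) : node * node :=
  match f with
  | FOut => (SB 1 2, PV 1)
  | FC j => (PV j, SB j (succv n j))
  | FE j => (SB j (succv n j), SB (succv n j) j)
  | FI k => (SB (k+2) 1, Wh k (k+2))
  end.

Lemma prev_aux_in w l v : In v l -> In (prev_aux w l v) (w :: l).
Proof.
  revert w; induction l as [|a l IH]; intros w Hv; simpl in *; [contradiction|].
  destruct (node_eqb a v) eqn:E; [left; auto|].
  rewrite node_eqb_nb in E.
  destruct Hv as [Hv|Hv].
  - subst. assert (nb v v = true) by (apply nb_spec; auto). congruence.
  - right. apply IH. auto.
Qed.

Lemma last_in_cons (l : list node) w b : In (last (b :: l) w) (b :: l).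
Proof.
  revert b. induction l as [|c l IH]; intro b; [left; auto|].
  change (last (b :: c :: l) w) with (last (c :: l) w). right. apply IH.
Qed.

Lemma prevc_in l v : In v l -> In (prevc l v) l.
Proof.
  destruct l as [|w l]; simpl; intro Hv; [contradiction|].
  destruct (node_eqb w v) eqn:E.
  - apply last_in_cons.
  - rewrite node_eqb_nb in E. destruct Hv as [Hv|Hv].
    + subst. assert (nb v v = true) by (apply nb_spec; auto). congruence.
    + apply prev_aux_in. auto.
Qed.

Ltac ev := unfold prevc; cbn [prev_aux last tl map app]; rewrite ?node_eqb_nb; cbn [nb].

Lemma phi_step n u v : 3 <= n -> vnode n u -> In v (rot' n u) ->
  fc n (v, prevc (rot' n v) u) = fc n (u, v) /\
  (mu n (u, v) = 0 \/ mu n (v, prevc (rot' n v) u) < mu n (u, v)).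
Proof.
  intros Hn Hu Hv. destruct u as [j|i x|i|a b]; simpl in Hu.
  all: rot_cases Hv.
  all: unfold rot', swidx, idx1; unfold succv, predv; crush; ev; unfold fc, mu, succv, predv; crush.
  all: try (split; [first [reflexivity | f_equal; lia] | lia]).
Qed.

Definition validf (n : nat) (f : face) : Prop :=
  match f with
  | FOut => True
  | FC j | FE j => 1 <= j <= n
  | FI k => 1 <= k <= n - 3
  end.

Lemma mu_zero n u v : 3 <= n -> vnode n u -> In v (rot' n u) ->
  mu n (u, v) = 0 -> (u, v) = canon n (fc n (u, v)).
Proof.
  intros Hn Hu Hv. destruct u as [j|i x|i|a b]; simpl in Hu.
  all: rot_cases Hv.
  all: unfold mu, fc, canon, succv, predv; crush; intro Hm; try lia.
  all: repeat f_equal; lia.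
Qed.

Lemma fc_valid n u v : 3 <= n -> vnode n u -> In v (rot' n u) -> validf n (fc n (u, v)).
Proof.
  intros Hn Hu Hv. destruct u as [j|i x|i|a b]; simpl in Hu.
  all: rot_cases Hv.
  all: unfold fc, validf, succv, predv; crush; lia.
Qed.

Lemma canon_ok n f : 3 <= n -> validf n f ->
  vnode n (fst (canon n f)) /\ In (snd (canon n f)) (rot' n (fst (canon n f)))
  /\ fc n (canon n f) = f.
Proof.
  intros Hn Hf. destruct f as [|j|j|k]; simpl in Hf |- *;
  unfold rot', swidx, idx1, fc, succv, predv; crush; simpl.
  all: try (split; [lia|split; [in_tac|first [reflexivity | f_equal; lia]]]).
Qed.


Section Fw.
Variable n : nat.
Hypothesis Hn : 3 <= n.
Let T := fan n.

Lemma dart_phi d : is_dart n T d ->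
  is_dart n T (phi n T d) /\ fc n (phi n T d) = fc n d /\
  (mu n d = 0 \/ mu n (phi n T d) < mu n d).
Proof.
  destruct d as [u v]. unfold T. rewrite dart_fan by auto. intros [Hu Hv].
  destruct (rot_sym n u v Hn Hu Hv) as [Hv' Hu'].
  unfold phi. rewrite rot_fan by auto.
  rewrite dart_fan by auto.
  destruct (phi_step n u v Hn Hu Hv) as [H1 H2].
  split; [split; auto; apply prevc_in; auto|split; auto].
Qed.

Lemma sf_fc d e : same_face n T d e -> fc n d = fc n e.
Proof.
  induction 1 as [d e [Hd He]| | |]; subst; auto.
  - symmetry. apply dart_phi. auto.
  - congruence.
Qed.

Lemma to_canon d : is_dart n T d -> same_face n T d (canon n (fc n d)).
Proof.
  remember (mu n d) as m eqn:Em. revert d Em.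
  induction m as [m IH] using (well_founded_induction lt_wf).
  intros d Em Hd.
  destruct (dart_phi d Hd) as [Hd' [Hf Hm]].
  destruct (Nat.eq_dec m 0) as [Z|Z].
  - subst m. destruct d as [u v]. unfold T in Hd. rewrite dart_fan in Hd by auto.
    destruct Hd as [Hu Hv]. rewrite <- (mu_zero n u v Hn Hu Hv) by auto.
    apply rst_refl.
  - destruct Hm as [Hm|Hm]; [lia|].
    apply rst_trans with (phi n T d).
    + apply rst_step. split; auto.
    + rewrite <- Hf. apply (IH (mu n (phi n T d))); auto. lia.
Qed.

Lemma sf_iff d e : is_dart n T d -> is_dart n T e -> (same_face n T d e <-> fc n d = fc n e).
Proof.
  intros Hd He. split; [apply sf_fc|]. intro E.
  apply rst_trans with (canon n (fc n d)); [apply to_canon; auto|].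
  rewrite E. apply rst_sym. apply to_canon; auto.
Qed.

Lemma outer_is_dart : is_dart n T (outer_dart n) /\ fc n (outer_dart n) = FOut.
Proof.
  destruct (canon_ok n FOut Hn I) as [H1 [H2 H3]]. simpl in *.
  unfold T, outer_dart. rewrite dart_fan by auto. auto.
Qed.

Lemma inner_iff d : inner_dart n T d <-> is_dart n T d /\ fc n d <> FOut.
Proof.
  destruct outer_is_dart as [Ho Fo].
  unfold inner_dart. split; intros [Hd H]; split; auto; intro E.
  - apply H. apply sf_iff; auto. congruence.
  - apply H. rewrite <- Fo. apply sf_iff; auto.
Qed.

Lemma dart_valid d : is_dart n T d -> validf n (fc n d).
Proof.
  destruct d as [u v]. unfold T. rewrite dart_fan by auto. intros [Hu Hv].
  apply fc_valid; auto.
Qed.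

Lemma canon_dart f : validf n f -> is_dart n T (canon n f) /\ fc n (canon n f) = f.
Proof.
  intro Hf. destruct (canon_ok n f Hn Hf) as [H1 [H2 H3]].
  destruct (canon n f) as [u v] eqn:Ec. simpl in *.
  unfold T. rewrite dart_fan by auto. auto.
Qed.

End Fw.

Definition lab (f : face) : qlabel :=
  match f with
  | FOut => Bd 0
  | FC j => Bd (2 * j - 1)
  | FE j => Bd (2 * j)
  | FI k => Int k
  end.


Definition tedges (i : nat) : list (node * node) :=
  [(Wh i 1, SB 1 (i+2)); (Wh i 1, SB 1 (i+3)); (Wh i 1, Ce i);
   (Wh i (i+2), SB (i+2) (i+3)); (Wh i (i+2), SB (i+2) 1); (Wh i (i+2), Ce i);
   (Wh i (i+3), SB (i+3) 1); (Wh i (i+3), SB (i+3) (i+2)); (Wh i (i+3), Ce i)].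

Lemma flat_map_ext_in {A B} (f g : A -> list B) l :
  (forall x, In x l -> f x = g x) -> flat_map f l = flat_map g l.
Proof.
  induction l; simpl; intros H; auto. rewrite H by auto. f_equal. auto.
Qed.

Lemma dimer_fan n : dimer_edges (fan n) = flat_map tedges (seq 0 (n - 2)).
Proof.
  unfold dimer_edges. rewrite fan_len. apply flat_map_ext_in.
  intros i Hi. apply in_seq in Hi. rewrite tri_fan by lia. simpl.
  crush. reflexivity.
Qed.

Lemma filter_flat {A B} (q : B -> bool) (F : A -> list B) l :
  filter q (flat_map F l) = flat_map (fun i => filter q (F i)) l.
Proof. induction l; simpl; auto. rewrite filter_app. f_equal. auto. Qed.

Lemma len_flat {A B} (F : A -> list B) l :
  length (flat_map F l) = list_sum (map (fun i => length (F i)) l).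
Proof. induction l; simpl; auto. rewrite length_app. f_equal. auto. Qed.

Lemma sum_ind {A} (p : A -> bool) (g : A -> nat) l :
  (forall x, In x l -> g x = if p x then 1 else 0) -> list_sum (map g l) = length (filter p l).
Proof.
  induction l; simpl; intro H; auto. rewrite H by auto.
  destruct (p a); simpl; rewrite IHl; auto.
Qed.

Lemma deg_SB n x y : 3 <= n -> vnode n (SB x y) ->
  black_degree (fan n) (SB x y) = length (swidx n x y).
Proof.
  intros Hn Hv.
  assert (L := f_equal (@length _) (side_whites_fan n x y Hn Hv)).
  rewrite length_map in L. rewrite <- L. unfold side_whites. rewrite length_map.
  unfold black_degree. rewrite dimer_fan, filter_flat, len_flat, fan_len.
  apply sum_ind. intros i Hi. apply in_seq in Hi. rewrite tri_fan by lia.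
  cbn [filter tedges snd has_corner]. rewrite ?node_eqb_nb. cbn [nb].
  simpl in Hv. crush; reflexivity.
Qed.

Lemma deg_Ce n i : i < n - 2 -> black_degree (fan n) (Ce i) = 3.
Proof.
  intros Hi. unfold black_degree. rewrite dimer_fan, filter_flat, len_flat.
  transitivity (list_sum (map (fun j => if j =? i then 3 else 0) (seq 0 (n - 2)))).
  - f_equal. apply map_ext_in. intros j Hj. cbn [filter tedges snd].
    rewrite ?node_eqb_nb. cbn [nb]. crush; reflexivity.
  - assert (G : forall s m, s <= i < s + m ->
      list_sum (map (fun j => if j =? i then 3 else 0) (seq s m)) = 3).
    { intros s m. revert s. induction m; intros s Hs; [lia|]. simpl.
      destruct (Nat.eqb_spec s i).
      + subst. assert (Z : forall t k, i < t -> list_sum (map (fun j => if j =? i then 3 else 0) (seq t k)) = 0).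
        { intros t k. revert t. induction k; intros t Ht; simpl; auto.
          destruct (Nat.eqb_spec t i); [lia|]. rewrite IHk; lia. }
        rewrite Z; lia.
      + rewrite IHm; lia. }
    apply G. lia.
Qed.


Definition isBd (f : face) : Prop :=
  match f with FC _ | FE _ => True | _ => False end.

Lemma tedges_darts n i e : 3 <= n -> i < n - 2 -> In e (tedges i) ->
  is_dart n (fan n) (fst e, snd e) /\ is_dart n (fan n) (snd e, fst e).
Proof.
  intros Hn Hi He.
  assert (G : vnode n (fst e) /\ In (snd e) (rot' n (fst e))).
  { unfold tedges in He. simpl in He.
    repeat (destruct He as [He|He]; [subst e; simpl; unfold rot'; crush; simpl; split; [lia|in_tac]|]).
    contradiction. }
  destruct G as [G1 G2]. destruct (rot_sym n _ _ Hn G1 G2).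
  rewrite !dart_fan by auto. auto.
Qed.

Lemma bd_edge n i e : 3 <= n -> i < n - 2 -> In e (tedges i) ->
  black_degree (fan n) (snd e) = 1 ->
  isBd (fc n (snd e, fst e)) /\ isBd (fc n (fst e, snd e)).
Proof.
  intros Hn Hi He. unfold tedges in He. simpl in He.
  repeat (destruct He as [He|He]; [subst e; simpl;
      first [rewrite deg_Ce by lia; discriminate |
             rewrite deg_SB by (simpl; lia); unfold swidx, idx1, fc; crush; simpl; intro; try discriminate; split; exact I]|]).
  contradiction.
Qed.

Definition arr (n i : nat) : list (qlabel * qlabel) :=
  if i =? 0 then [(Bd 1, Bd 2); (Bd 2, Int 1); (Bd 3, Bd 4); (Bd 2, Bd 3); (Bd 4, Bd 2);
                  (Bd 4, Bd 5); (Int 1, Bd 4)]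
  else if i =? n - 3 then
    [(Bd (2*n), Bd 1); (Int (n-3), Bd (2*n)); (Bd (2*n-3), Bd (2*n-2)); (Bd (2*n-2), Int (n-3));
     (Bd (2*n-1), Bd (2*n)); (Bd (2*n-2), Bd (2*n-1)); (Bd (2*n), Bd (2*n-2))]
  else [(Int i, Int (i+1)); (Bd (2*i+3), Bd (2*i+4)); (Bd (2*i+4), Int i);
        (Bd (2*i+4), Bd (2*i+5)); (Int (i+1), Bd (2*i+4))].

Definition rfilt n := fun e : node * node => negb (black_degree (fan n) (snd e) =? 2).
Definition amap n := fun e : node * node => (lab (fc n (snd e, fst e)), lab (fc n (fst e, snd e))).

Ltac leq := cbn [lab]; repeat match goal with
  | |- (_ :: _) = (_ :: _) => f_equal
  | |- (_, _) = (_, _) => f_equal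
  | |- Bd _ = Bd _ => f_equal
  | |- Int _ = Int _ => f_equal
  end; try reflexivity; try lia.

Lemma tri_arr n i : 4 <= n -> i < n - 2 -> map (amap n) (filter (rfilt n) (tedges i)) = arr n i.
Proof.
  intros Hn Hi. unfold tedges, rfilt. cbn [filter snd].
  rewrite !deg_Ce by lia.
  rewrite !deg_SB by (simpl; lia).
  unfold swidx, idx1, amap, arr.
  repeat (try (exfalso; lia); destr_b; cbn [length app]).
  all: cbn [filter negb map fst snd fc lab]; crush; leq.
Qed.


Lemma pf_here {X} (x y : X) t : x = y -> Permutation (y :: t) (x :: t).
Proof. intros; subst; auto. Qed.
Lemma pf_cons {X} (x y : X) t t' : Permutation t (x :: t') -> Permutation (y :: t) (x :: y :: t').
Proof. intro H. eapply perm_trans; [apply perm_skip; exact H|]. apply perm_swap. Qed.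
Lemma pf_app {X} (x : X) B t t' : Permutation t (x :: t') -> Permutation (B ++ t) (x :: B ++ t').
Proof. intro H. eapply perm_trans; [apply Permutation_app_head; exact H|].
  apply Permutation_sym, Permutation_middle. Qed.
Lemma bf_here {X} (B : list X) t : Permutation (B ++ t) (B ++ t).
Proof. auto. Qed.
Lemma bf_cons {X} (B : list X) y t t' : Permutation t (B ++ t') -> Permutation (y :: t) (B ++ y :: t').
Proof. intro H. eapply perm_trans; [apply perm_skip; exact H|]. apply Permutation_middle. Qed.
Lemma bf_app {X} (B C : list X) t t' : Permutation t (B ++ t') -> Permutation (C ++ t) (B ++ C ++ t').
Proof. intro H. eapply perm_trans; [apply Permutation_app_head; exact H|].
  rewrite !app_assoc. apply Permutation_app_tail, Permutation_app_comm. Qed.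
Lemma pstep {X} (x : X) L R R' : Permutation R (x :: R') -> Permutation L R' -> Permutation (x :: L) R.
Proof. intros H1 H2. eapply perm_trans; [apply perm_skip; exact H2|]. apply Permutation_sym; auto. Qed.
Lemma bstep {X} (B : list X) L R R' : Permutation R (B ++ R') -> Permutation L R' -> Permutation (B ++ L) R.
Proof. intros H1 H2. eapply perm_trans; [apply Permutation_app_head; exact H2|]. apply Permutation_sym; auto. Qed.

Ltac pfind := first [ apply pf_here; solve [leq] | apply pf_cons; pfind | apply pf_app; pfind ].
Ltac bfind := first [ apply bf_here | apply bf_cons; bfind | apply bf_app; bfind ].
Ltac psolve := match goal with
  | |- Permutation [] [] => apply perm_nil
  | |- Permutation (?B ++ _) _ => eapply bstep; [bfind | psolve]
  | |- Permutation (_ :: _) _ => eapply pstep; [pfind | psolve]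
  end.

Definition xpair (i : nat) : list (qlabel * qlabel) :=
  [(Bd (2*i+3), Bd (2*i+4)); (Bd (2*i+4), Bd (2*i+5))].

Lemma fm_app_perm {A B} (f g : A -> list B) l :
  Permutation (flat_map (fun i => f i ++ g i) l) (flat_map f l ++ flat_map g l).
Proof.
  induction l as [|a l IH]; simpl; auto.
  rewrite <- !app_assoc. apply Permutation_app_head.
  eapply perm_trans; [apply Permutation_app_head; exact IH|].
  apply Permutation_app_swap_app.
Qed.

Lemma fm_single {A B} (h : A -> B) l : flat_map (fun i => [h i]) l = map h l.
Proof. induction l; simpl; f_equal; auto. Qed.

Lemma map_seq2 {B} (h : nat -> B) m : forall s,
  map h (seq (2*s+4) (2*m)) = flat_map (fun i => [h (2*i+4); h (2*i+5)]) (seq s m).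
Proof.
  induction m as [|m IH]; intro s.
  - replace (2 * 0) with 0 by lia. reflexivity.
  - replace (2 * S m) with (S (S (2 * m))) by lia. cbn [seq map flat_map app].
  replace (S (2*s+4)) with (2*s+5) by lia.
  replace (S (2*s+5)) with (2*(S s)+4) by lia. rewrite IH. reflexivity.
Qed.

Lemma fm_perm {A B} (f g : A -> list B) l :
  (forall i, In i l -> Permutation (f i) (g i)) -> Permutation (flat_map f l) (flat_map g l).
Proof. induction l; simpl; intro H; auto. apply Permutation_app; auto. Qed.

Lemma perm_main n : 4 <= n -> Permutation (flat_map (arr n) (seq 0 (n - 2))) (QF_arrows n).
Proof.
  intro Hn. remember (n - 4) as m eqn:Em. replace n with (m + 4) in * by lia. clear Em Hn.
  set (al := fun k => (Int k, Int (k + 1))).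
  set (be := fun i => (Int (i + 1), Bd (2 * i + 4))).
  set (ga := fun k => (Bd (2 * k + 4), Int k)).
  assert (Hs : seq 0 (m + 4 - 2) = 0 :: seq 1 m ++ [m + 1]).
  { replace (m + 4 - 2) with (S (S m)) by lia. rewrite seq_S. cbn [seq app].
    replace (0 + S m) with (m + 1) by lia. reflexivity. }
  rewrite Hs. cbn [flat_map]. rewrite flat_map_app. cbn [flat_map]. rewrite !app_nil_r.
  assert (Em : Permutation (flat_map (arr (m + 4)) (seq 1 m))
     (flat_map (fun i => xpair i ++ [al i] ++ [be i] ++ [ga i]) (seq 1 m)) ).
  { apply fm_perm. intros i Hi. apply in_seq in Hi. unfold arr, xpair.
    crush. subst al be ga. cbn beta. cbn [app]. psolve. }
  eapply perm_trans.
  { apply Permutation_app_head, Permutation_app_tail.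
    eapply perm_trans; [exact Em|].
    eapply perm_trans; [apply fm_app_perm|].
    apply Permutation_app_head.
    eapply perm_trans; [apply fm_app_perm|].
    apply Permutation_app_head.
    apply fm_app_perm. }
  rewrite !fm_single.
  unfold arr. crush.
  assert (X1 : x_arrows (m + 4) =
     [(Bd (2*m+8), Bd 1); (Bd 1, Bd 2); (Bd 2, Bd 3); (Bd 3, Bd 4); (Bd 4, Bd 5)]
     ++ flat_map xpair (seq 1 m) ++
     [(Bd (2*m+5), Bd (2*m+6)); (Bd (2*m+6), Bd (2*m+7)); (Bd (2*m+7), Bd (2*m+8))]).
  { unfold x_arrows.
    replace (2 * (m + 4)) with (5 + (2 * m + 3)) by lia.
    rewrite seq_app, map_app.
    replace (seq (1 + 5) (2 * m + 3)) with (seq (2 * 1 + 4) (2 * m) ++ seq (2 * m + 6) 3).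
    2:{ replace (2 * m + 6) with (2 * 1 + 4 + 2 * m) by lia. rewrite <- seq_app. f_equal; lia. }
    rewrite map_app, map_seq2.
    f_equal; [cbn [seq map]; crush; leq|].
    f_equal; [apply flat_map_ext_in; intros i Hi; apply in_seq in Hi; unfold xpair; crush; leq|].
    cbn [seq map]. crush. leq. }
  assert (XB : map (fun k => (Int k, Bd (2 * k + 2))) (seq 1 (m + 4 - 3)) = [(Int 1, Bd 4)] ++ map be (seq 1 m)).
  { replace (m + 4 - 3) with (S m) by lia. cbn [seq map app]. f_equal.
    rewrite <- (seq_shift m 1), map_map. apply map_ext. intro i. subst be. cbn beta. leq. }
  assert (XG : map (fun k => (Bd (2 * k + 4), Int k)) (seq 1 (m + 4 - 3)) = map ga (seq 1 m) ++ [(Bd (2*m+6), Int (m+1))]).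
  { replace (m + 4 - 3) with (S m) by lia. rewrite seq_S, map_app. f_equal. cbn [map]. leq. }
  assert (XA : map (fun k => (Int k, Int (k + 1))) (seq 1 (m + 4 - 4)) = map al (seq 1 m)).
  { replace (m + 4 - 4) with m by lia. reflexivity. }
  unfold QF_arrows. rewrite X1, XB, XG, XA.
  rewrite <- !app_assoc. cbn [app].
  psolve.
Qed.


Ltac nodeq := match goal with
  | |- (_, _) = (_, _) => f_equal; nodeq
  | |- Wh _ _ = Wh _ _ => f_equal; lia
  | |- SB _ _ = SB _ _ => f_equal; lia
  | |- Ce _ = Ce _ => f_equal; lia
  | |- PV _ = PV _ => f_equal; lia
  | |- FC _ = FC _ => f_equal; lia
  | |- FE _ = FE _ => f_equal; lia
  | |- FI _ = FI _ => f_equal; lia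
  end.
Ltac pneq := first [reflexivity | nodeq].
Ltac pin_tac := match goal with
  | |- _ = _ \/ _ => first [left; pneq | right; pin_tac]
  | |- _ = _ => pneq
  end.

Lemma lab_inj n f g : validf n f -> validf n g -> f <> FOut -> g <> FOut -> lab f = lab g -> f = g.
Proof.
  destruct f, g; simpl; intros; try congruence; inversion H3; f_equal; lia.
Qed.

Lemma in_dimer n i e : 3 <= n -> i < n - 2 -> In e (tedges i) -> In e (dimer_edges (fan n)).
Proof.
  intros. rewrite dimer_fan, in_flat_map. exists i. split; auto. apply in_seq. lia.
Qed.

Lemma bdry_ok n i e : 3 <= n -> i < n - 2 -> In e (tedges i) ->
  black_degree (fan n) (snd e) = 1 -> boundary_edge (fan n) e.
Proof.
  intros Hn Hi He D. split; auto.
  unfold reduced_edges. apply filter_In. split; [eapply in_dimer; eauto|].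
  rewrite D. reflexivity.
Qed.

Ltac wit e i :=
  exists e; split;
  [ apply (bdry_ok _ i); [lia | lia | unfold tedges; cbn [In]; pin_tac
     | cbn [snd]; rewrite deg_SB by (simpl; lia); unfold swidx, idx1; crush; reflexivity ]
  | cbn [fc fst snd]; unfold succv; crush; first [left; pneq | right; pneq] ].

Lemma bd_witness n f : 3 <= n -> validf n f -> isBd f ->
  exists e, boundary_edge (fan n) e /\ (fc n (snd e, fst e) = f \/ fc n (fst e, snd e) = f).
Proof.
  intros Hn Hf Hb.
  destruct f as [|j|j|k]; simpl in Hf, Hb; try contradiction.
  - destruct (Nat.eq_dec j 1) as [E1|E1]; [subst j; wit (Wh 0 1, SB 1 2) 0|].
    destruct (Nat.eq_dec j n) as [En|En]; [subst j; wit (Wh (n-3) n, SB n (n-1)) (n-3)|].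
    wit (Wh (j-2) j, SB j (j+1)) (j-2).
  - destruct (Nat.eq_dec j 1) as [E1|E1]; [subst j; wit (Wh 0 1, SB 1 2) 0|].
    destruct (Nat.eq_dec j n) as [En|En]; [subst j; wit (Wh (n-3) n, SB n 1) (n-3)|].
    wit (Wh (j-2) j, SB j (j+1)) (j-2).
Qed.

Lemma map_flat {A B C} (g : B -> C) (F : A -> list B) l :
  map g (flat_map F l) = flat_map (fun i => map g (F i)) l.
Proof. induction l; simpl; auto. rewrite map_app. f_equal. auto. Qed.

Lemma rq n A : 3 <= n ->
  Permutation (map (amap n) (reduced_edges (fan n))) A -> reduced_quiver_is n (fan n) A.
Proof.
  intros Hn HP. exists (fun d => lab (fc n d)).
  split; [|split; [|split; [|split; [|split]]]].
  - intros d e Hd He. apply inner_iff in Hd; auto. apply inner_iff in He; auto.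
    destruct Hd as [Hd Od]. destruct He as [He Oe].
    rewrite sf_iff by auto. split; [intro E; rewrite E; auto|].
    apply lab_inj with n; auto; apply dart_valid; auto.
  - intros d Hd. apply inner_iff in Hd; auto. destruct Hd as [Hd Od].
    pose proof (dart_valid n Hn d Hd) as V.
    destruct (fc n d); simpl in *; try congruence; lia.
  - intros l Hl.
    assert (G : exists f, validf n f /\ f <> FOut /\ lab f = l).
    { destruct l as [k|k]; simpl in Hl.
      - destruct (Nat.Even_or_Odd k) as [[j Ej]|[j Ej]].
        + exists (FE j). simpl. split; [lia|split; [discriminate|f_equal; lia]].
        + exists (FC (j+1)). simpl. split; [lia|split; [discriminate|f_equal; lia]].
      - exists (FI k). simpl. split; [lia|split; [discriminate|auto]]. }
    destruct G as [f [Vf [Of Lf]]].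
    destruct (canon_dart n Hn f Vf) as [Cd Cf].
    exists (canon n f). split; [apply inner_iff; auto; split; auto; congruence|].
    rewrite Cf. auto.
  - intros j Hj. unfold corner_dart, edge_dart. cbn [fc]. rewrite !Nat.eqb_refl.
    simpl. auto.
  - intros d Hd. apply inner_iff in Hd; auto. destruct Hd as [Hd Od].
    pose proof (dart_valid n Hn d Hd) as V.
    split.
    + intros [e [[Hr Hdeg] Hs]].
      unfold reduced_edges in Hr. apply filter_In in Hr. destruct Hr as [Hr _].
      rewrite dimer_fan, in_flat_map in Hr. destruct Hr as [i [Hi He]]. apply in_seq in Hi.
      destruct (tedges_darts n i e Hn ltac:(lia) He) as [D1 D2].
      destruct (bd_edge n i e Hn ltac:(lia) He Hdeg) as [B1 B2].
      unfold arrow_src, arrow_tgt in Hs.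
      assert (isBd (fc n d)).
      { destruct Hs as [Hs|Hs]; apply (sf_fc n Hn) in Hs; rewrite Hs; auto. }
      destruct (fc n d); simpl in *; try contradiction; eauto.
    + intros [k Hk].
      assert (B : isBd (fc n d)) by (destruct (fc n d); simpl in *; try congruence; auto).
      destruct (bd_witness n (fc n d) Hn V B) as [e [Be Fe]].
      exists e. split; auto.
      destruct (Be) as [Hr _].
      unfold reduced_edges in Hr. apply filter_In in Hr. destruct Hr as [Hr _].
      rewrite dimer_fan, in_flat_map in Hr. destruct Hr as [i [Hi He]]. apply in_seq in Hi.
      destruct (tedges_darts n i e Hn ltac:(lia) He) as [D1 D2].
      unfold arrow_src, arrow_tgt.
      destruct Fe as [Fe|Fe]; [left|right]; apply sf_iff; auto.
  - exact HP.
Qed.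

Lemma perm_gen n : 4 <= n -> Permutation (map (amap n) (reduced_edges (fan n))) (QF_arrows n).
Proof.
  intro Hn. unfold reduced_edges. rewrite dimer_fan, filter_flat, map_flat.
  erewrite flat_map_ext_in; [apply perm_main; auto|].
  intros i Hi. apply in_seq in Hi. apply tri_arr; lia.
Qed.

Lemma perm3 : Permutation (map (amap 3) (reduced_edges (fan 3))) QF3_arrows.
Proof.
  vm_compute. psolve.
Qed.

Theorem proposition3p2 :
  (forall n : nat, 4 <= n -> reduced_quiver_is n (fan n) (QF_arrows n))
  /\ reduced_quiver_is 3 (fan 3) QF3_arrows.
Proof.
  split.
  - intros n Hn. apply rq; [lia|]. apply perm_gen; auto.
  - apply rq; [lia|]. apply perm3.
Qed.
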